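(* Let $A$ be a commutative algebra over a field of characteristic $p\neq3$ with multiplication $\star$ satisfying the Tortken identity $(a\star b)\star(c\star d)-(a\star d)\star(c\star b)=(a,b,c)\star d-(a,d,c)\star b$. Then for all $a,b,c,x,y\in A$, $$(a,(b,x,c),y)+(b,(c,x,a),y)+(c,(a,x,b),y)-(a,(b,y,c),x)-(b,(c,y,a),x)-(c,(a,y,b),x)=0.$$
   Context: The associator is $(a,b,c)=a\star(b\star c)-(a\star b)\star c$. *)

(* Defs.v *)
From mathcomp Require Import all_boot all_algebra.
Set Implicit Arguments. Unset Strict Implicit. Unset Printing Implicit Defensive.
Import GRing.Theory.
Local Open Scope ring_scope.

Definition bilinear_mul (F : fieldType) (A : lmodType F) (mul : A -> A -> A) :=
  (forall (k : F) (a b c : A), mul (k *: a + b) c = k *: mul a c + mul b c) /\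
  (forall (k : F) (a b c : A), mul a (k *: b + c) = k *: mul a b + mul a c).

Definition commutative_mul (A : Type) (mul : A -> A -> A) :=
  forall a b, mul a b = mul b a.

Definition assoc (A : zmodType) (mul : A -> A -> A) (a b c : A) : A :=
  mul a (mul b c) - mul (mul a b) c.

Definition tortken (A : zmodType) (mul : A -> A -> A) :=
  forall a b c d : A,
    mul (mul a b) (mul c d) - mul (mul a d) (mul c b)
    = mul (assoc mul a b c) d - mul (assoc mul a d c) b.

(* Main.v *)
Require Import Defs.
From mathcomp Require Import all_boot all_algebra.
Local Open Scope ring_scope.

Module Tk.
Set Implicit Arguments. Unset Strict Implicit. Unset Printing Implicit Defensive.
Import GRing.Theory.
Local Open Scope ring_scope.

Inductive mono := MV of nat | MM of mono & mono.

Fixpoint mono_eqb (m n : mono) : bool :=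
  match m, n with
  | MV i, MV j => (i == j)%N
  | MM m1 m2, MM n1 n2 => mono_eqb m1 n1 && mono_eqb m2 n2
  | _, _ => false
  end.

Lemma mono_eqbP m n : mono_eqb m n -> m = n.
Proof.
elim: m n => [i|m1 IH1 m2 IH2] [j|n1 n2] //=; first by move/eqP->.
by case/andP => /IH1 -> /IH2 ->.
Qed.

Fixpoint mono_cmp (m n : mono) : comparison :=
  match m, n with
  | MV i, MV j => Nat.compare i j
  | MV _, MM _ _ => Lt
  | MM _ _, MV _ => Gt
  | MM m1 m2, MM n1 n2 =>
      match mono_cmp m1 n1 with Eq => mono_cmp m2 n2 | c => c end
  end.

Definition cmul m n := match mono_cmp m n with Gt => MM n m | _ => MM m n end.

Inductive ex :=
  | EV of nat | EM of ex & ex | EAdd of ex & ex | ESub of ex & ex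
  | EZs of int & ex.

Definition nf := seq (int * mono).

Fixpoint norm (e : ex) : nf :=
  match e with
  | EV n => [:: (1%R, MV n)]
  | EM e f => [seq (p.1 * q.1, cmul p.2 q.2) | p <- norm e, q <- norm f]
  | EAdd e f => norm e ++ norm f
  | ESub e f => norm e ++ [seq (- p.1, p.2) | p <- norm f]
  | EZs z e => [seq (z * p.1, p.2) | p <- norm e]
  end.

Definition coefm (l : nf) m := foldr (fun p s => if mono_eqb p.2 m then p.1 + s else s) 0 l.

Fixpoint zcheck (fuel : nat) (l : nf) : bool :=
  match fuel with
  | 0 => nilp l
  | fuel.+1 => match l with
       | [::] => true
       | p :: _ => (coefm l p.2 == 0) &&
                   zcheck fuel [seq q <- l | ~~ mono_eqb q.2 p.2]
       end
  end.

Section Sound.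
Variables (F : fieldType) (A : lmodType F) (mul : A -> A -> A).
Hypothesis hbil : bilinear_mul mul.
Hypothesis hcomm : commutative_mul mul.
Variable env : nat -> A.

Fixpoint evalm m := match m with MV n => env n | MM m n => mul (evalm m) (evalm n) end.
Fixpoint evale e := match e with
  | EV n => env n
  | EM e f => mul (evale e) (evale f)
  | EAdd e f => evale e + evale f
  | ESub e f => evale e - evale f
  | EZs z e => evale e *~ z
  end.
Definition evalnf (l : nf) := \sum_(p <- l) evalm p.2 *~ p.1.

Lemma mulDl' a b c : mul (a + b) c = mul a c + mul b c.
Proof. by case: hbil => h _; rewrite -[a]scale1r h !scale1r. Qed.
Lemma mulDr' a b c : mul a (b + c) = mul a b + mul a c.
Proof. by case: hbil => _ h; rewrite -[b]scale1r h !scale1r. Qed.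
Lemma mul0l' c : mul 0 c = 0.
Proof. by apply: (addrI (mul 0 c)); rewrite -mulDl' !addr0. Qed.
Lemma mul0r' c : mul c 0 = 0.
Proof. by apply: (addrI (mul c 0)); rewrite -mulDr' !addr0. Qed.
Lemma mulNl' a c : mul (- a) c = - mul a c.
Proof. by apply: (addrI (mul a c)); rewrite -mulDl' !subrr mul0l'. Qed.
Lemma mulNr' a c : mul c (- a) = - mul c a.
Proof. by apply: (addrI (mul c a)); rewrite -mulDr' !subrr mul0r'. Qed.
Lemma mulnl' a c n : mul (a *+ n) c = mul a c *+ n.
Proof. elim: n => [|n IH]; by rewrite ?mul0l' // !mulrS mulDl' IH. Qed.
Lemma mulnr' a c n : mul c (a *+ n) = mul c a *+ n.
Proof. elim: n => [|n IH]; by rewrite ?mul0r' // !mulrS mulDr' IH. Qed.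
Lemma mulzl' a c z : mul (a *~ z) c = mul a c *~ z.
Proof. by case: z => n; rewrite ?NegzE ?mulrNz ?mulNl' mulnl'. Qed.
Lemma mulzr' a c z : mul c (a *~ z) = mul c a *~ z.
Proof. by case: z => n; rewrite ?NegzE ?mulrNz ?mulNr' mulnr'. Qed.
Lemma mulsuml' I (s : seq I) (f : I -> A) c :
  mul (\sum_(i <- s) f i) c = \sum_(i <- s) mul (f i) c.
Proof. elim: s => [|i s IH]; by rewrite ?big_nil ?mul0l' // !big_cons mulDl' IH. Qed.
Lemma mulsumr' I (s : seq I) (f : I -> A) c :
  mul c (\sum_(i <- s) f i) = \sum_(i <- s) mul c (f i).
Proof. elim: s => [|i s IH]; by rewrite ?big_nil ?mul0r' // !big_cons mulDr' IH. Qed.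

Lemma sumrMz' I (s : seq I) (f : I -> A) z :
  (\sum_(i <- s) f i) *~ z = \sum_(i <- s) f i *~ z.
Proof. elim: s => [|i s IH]; by rewrite ?big_nil ?mul0rz // !big_cons mulrzDl IH. Qed.

Lemma cmulE m n : evalm (cmul m n) = mul (evalm m) (evalm n).
Proof. by rewrite /cmul; case: mono_cmp => //=; rewrite hcomm. Qed.

Lemma normE e : evale e = evalnf (norm e).
Proof.
rewrite /evalnf; elim: e => [n|e IHe f IHf|e IHe f IHf|e IHe f IHf|z e IHe] /=.
- by rewrite big_seq1.
- rewrite IHe IHf big_allpairs_dep mulsuml'; apply: eq_bigr => p _.
  rewrite mulsumr'; apply: eq_bigr => q _.
  by rewrite mulzl' mulzr' cmulE mulrzA mulrzAC.
- by rewrite IHe IHf; symmetry; apply: big_cat.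
- rewrite IHe IHf big_cat /= big_map; congr (_ + _).
  by rewrite -sumrN; apply: eq_bigr => p _; rewrite /= mulrNz.
- rewrite IHe big_map sumrMz'; apply: eq_bigr => p _.
  by rewrite /= mulrzA_C.
Qed.

Lemma coefmE l m : \sum_(p <- l | mono_eqb p.2 m) evalm p.2 *~ p.1 = evalm m *~ coefm l m.
Proof.
elim: l => [|p l IH]; first by rewrite big_nil.
rewrite big_cons /= IH; case: ifP => // /mono_eqbP ->.
by rewrite mulrzDr.
Qed.

Lemma mono_eqb_refl m : mono_eqb m m.
Proof. by elim: m => [n|m1 IH1 m2 IH2] /=; rewrite ?eqxx ?IH1 ?IH2. Qed.

Lemma zcheckP fuel l : zcheck fuel l -> evalnf l = 0.
Proof.
elim: fuel l => [|fuel IH] [|p l] /=; rewrite /evalnf ?big_nil //.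
move=> /andP [/eqP h0 /IH]; rewrite /evalnf mono_eqb_refl /= in h0 * => h1.
rewrite big_filter in h1.
rewrite big_cons (bigID (fun q : int * mono => mono_eqb q.2 p.2)) /= h1 addr0 coefmE.
by rewrite -mulrzDr h0 mulr0z.
Qed.

Lemma reflect_zero e : zcheck (size (norm e)) (norm e) -> evale e = 0.
Proof. by move=> h; rewrite normE; exact: zcheckP h. Qed.

End Sound.
Definition EG := (ESub (ESub (ESub (EAdd (EAdd (ESub (EM (EV 0) (EM (ESub (EM (EV 1) (EM (EV 3) (EV 2))) (EM (EM (EV 1) (EV 3)) (EV 2))) (EV 4))) (EM (EM (EV 0) (ESub (EM (EV 1) (EM (EV 3) (EV 2))) (EM (EM (EV 1) (EV 3)) (EV 2)))) (EV 4))) (ESub (EM (EV 1) (EM (ESub (EM (EV 2) (EM (EV 3) (EV 0))) (EM (EM (EV 2) (EV 3)) (EV 0))) (EV 4))) (EM (EM (EV 1) (ESub (EM (EV 2) (EM (EV 3) (EV 0))) (EM (EM (EV 2) (EV 3)) (EV 0)))) (EV 4)))) (ESub (EM (EV 2) (EM (ESub (EM (EV 0) (EM (EV 3) (EV 1))) (EM (EM (EV 0) (EV 3)) (EV 1))) (EV 4))) (EM (EM (EV 2) (ESub (EM (EV 0) (EM (EV 3) (EV 1))) (EM (EM (EV 0) (EV 3)) (EV 1)))) (EV 4)))) (ESub (EM (EV 0) (EM (ESub (EM (EV 1) (EM (EV 4) (EV 2))) (EM (EM (EV 1) (EV 4)) (EV 2))) (EV 3))) (EM (EM (EV 0) (ESub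 (EM (EV 1) (EM (EV 4) (EV 2))) (EM (EM (EV 1) (EV 4)) (EV 2)))) (EV 3)))) (ESub (EM (EV 1) (EM (ESub (EM (EV 2) (EM (EV 4) (EV 0))) (EM (EM (EV 2) (EV 4)) (EV 0))) (EV 3))) (EM (EM (EV 1) (ESub (EM (EV 2) (EM (EV 4) (EV 0))) (EM (EM (EV 2) (EV 4)) (EV 0)))) (EV 3)))) (ESub (EM (EV 2) (EM (ESub (EM (EV 0) (EM (EV 4) (EV 1))) (EM (EM (EV 0) (EV 4)) (EV 1))) (EV 3))) (EM (EM (EV 2) (ESub (EM (EV 0) (EM (EV 4) (EV 1))) (EM (EM (EV 0) (EV 4)) (EV 1)))) (EV 3)))).
Definition E1 := (EM (ESub (ESub (EM (EM (EV 0) (EV 1)) (EM (EV 2) (EV 3))) (EM (EM (EV 0) (EV 3)) (EM (EV 2) (EV 1)))) (ESub (EM (ESub (EM (EV 0) (EM (EV 1) (EV 2))) (EM (EM (EV 0) (EV 1)) (EV 2))) (EV 3)) (EM (ESub (EM (EV 0) (EM (EV 3) (EV 2))) (EM (EM (EV 0) (EV 3)) (EV 2))) (EV 1)))) (EV 4)).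
Definition E2 := (ESub (ESub (EM (EM (EV 0) (EM (EV 2) (EV 4))) (EM (EV 1) (EV 3))) (EM (EM (EV 0) (EV 3)) (EM (EV 1) (EM (EV 2) (EV 4))))) (ESub (EM (ESub (EM (EV 0) (EM (EM (EV 2) (EV 4)) (EV 1))) (EM (EM (EV 0) (EM (EV 2) (EV 4))) (EV 1))) (EV 3)) (EM (ESub (EM (EV 0) (EM (EV 3) (EV 1))) (EM (EM (EV 0) (EV 3)) (EV 1))) (EM (EV 2) (EV 4))))).
Definition E3 := (EM (ESub (ESub (EM (EM (EV 0) (EV 1)) (EM (EV 3) (EV 4))) (EM (EM (EV 0) (EV 4)) (EM (EV 3) (EV 1)))) (ESub (EM (ESub (EM (EV 0) (EM (EV 1) (EV 3))) (EM (EM (EV 0) (EV 1)) (EV 3))) (EV 4)) (EM (ESub (EM (EV 0) (EM (EV 4) (EV 3))) (EM (EM (EV 0) (EV 4)) (EV 3))) (EV 1)))) (EV 2)).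
Definition E4 := (EM (ESub (ESub (EM (EM (EV 0) (EV 1)) (EM (EV 4) (EV 3))) (EM (EM (EV 0) (EV 3)) (EM (EV 4) (EV 1)))) (ESub (EM (ESub (EM (EV 0) (EM (EV 1) (EV 4))) (EM (EM (EV 0) (EV 1)) (EV 4))) (EV 3)) (EM (ESub (EM (EV 0) (EM (EV 3) (EV 4))) (EM (EM (EV 0) (EV 3)) (EV 4))) (EV 1)))) (EV 2)).
Definition E5 := (EM (ESub (ESub (EM (EM (EV 0) (EV 2)) (EM (EV 1) (EV 3))) (EM (EM (EV 0) (EV 3)) (EM (EV 1) (EV 2)))) (ESub (EM (ESub (EM (EV 0) (EM (EV 2) (EV 1))) (EM (EM (EV 0) (EV 2)) (EV 1))) (EV 3)) (EM (ESub (EM (EV 0) (EM (EV 3) (EV 1))) (EM (EM (EV 0) (EV 3)) (EV 1))) (EV 2)))) (EV 4)).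
Definition E6 := (ESub (ESub (EM (EM (EM (EV 1) (EV 4)) (EV 0)) (EM (EV 2) (EV 3))) (EM (EM (EM (EV 1) (EV 4)) (EV 3)) (EM (EV 2) (EV 0)))) (ESub (EM (ESub (EM (EM (EV 1) (EV 4)) (EM (EV 0) (EV 2))) (EM (EM (EM (EV 1) (EV 4)) (EV 0)) (EV 2))) (EV 3)) (EM (ESub (EM (EM (EV 1) (EV 4)) (EM (EV 3) (EV 2))) (EM (EM (EM (EV 1) (EV 4)) (EV 3)) (EV 2))) (EV 0)))).
Definition E7 := (ESub (ESub (EM (EM (EV 0) (EM (EV 1) (EV 4))) (EM (EV 2) (EV 3))) (EM (EM (EV 0) (EV 3)) (EM (EV 2) (EM (EV 1) (EV 4))))) (ESub (EM (ESub (EM (EV 0) (EM (EM (EV 1) (EV 4)) (EV 2))) (EM (EM (EV 0) (EM (EV 1) (EV 4))) (EV 2))) (EV 3)) (EM (ESub (EM (EV 0) (EM (EV 3) (EV 2))) (EM (EM (EV 0) (EV 3)) (EV 2))) (EM (EV 1) (EV 4))))).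
Definition E8 := (ESub (ESub (EM (EM (EV 0) (EV 2)) (EM (EM (EV 1) (EV 4)) (EV 3))) (EM (EM (EV 0) (EV 3)) (EM (EM (EV 1) (EV 4)) (EV 2)))) (ESub (EM (ESub (EM (EV 0) (EM (EV 2) (EM (EV 1) (EV 4)))) (EM (EM (EV 0) (EV 2)) (EM (EV 1) (EV 4)))) (EV 3)) (EM (ESub (EM (EV 0) (EM (EV 3) (EM (EV 1) (EV 4)))) (EM (EM (EV 0) (EV 3)) (EM (EV 1) (EV 4)))) (EV 2)))).
Definition E9 := (ESub (ESub (EM (EM (EM (EV 1) (EV 3)) (EV 0)) (EM (EV 2) (EV 4))) (EM (EM (EM (EV 1) (EV 3)) (EV 4)) (EM (EV 2) (EV 0)))) (ESub (EM (ESub (EM (EM (EV 1) (EV 3)) (EM (EV 0) (EV 2))) (EM (EM (EM (EV 1) (EV 3)) (EV 0)) (EV 2))) (EV 4)) (EM (ESub (EM (EM (EV 1) (EV 3)) (EM (EV 4) (EV 2))) (EM (EM (EM (EV 1) (EV 3)) (EV 4)) (EV 2))) (EV 0)))).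
Definition E10 := (ESub (ESub (EM (EM (EV 0) (EM (EV 1) (EV 3))) (EM (EV 2) (EV 4))) (EM (EM (EV 0) (EV 4)) (EM (EV 2) (EM (EV 1) (EV 3))))) (ESub (EM (ESub (EM (EV 0) (EM (EM (EV 1) (EV 3)) (EV 2))) (EM (EM (EV 0) (EM (EV 1) (EV 3))) (EV 2))) (EV 4)) (EM (ESub (EM (EV 0) (EM (EV 4) (EV 2))) (EM (EM (EV 0) (EV 4)) (EV 2))) (EM (EV 1) (EV 3))))).
Definition E11 := (ESub (ESub (EM (EM (EV 0) (EV 2)) (EM (EM (EV 1) (EV 3)) (EV 4))) (EM (EM (EV 0) (EV 4)) (EM (EM (EV 1) (EV 3)) (EV 2)))) (ESub (EM (ESub (EM (EV 0) (EM (EV 2) (EM (EV 1) (EV 3)))) (EM (EM (EV 0) (EV 2)) (EM (EV 1) (EV 3)))) (EV 4)) (EM (ESub (EM (EV 0) (EM (EV 4) (EM (EV 1) (EV 3)))) (EM (EM (EV 0) (EV 4)) (EM (EV 1) (EV 3)))) (EV 2)))).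
Definition E12 := (ESub (ESub (EM (EM (EM (EV 2) (EV 4)) (EV 0)) (EM (EV 3) (EV 1))) (EM (EM (EM (EV 2) (EV 4)) (EV 1)) (EM (EV 3) (EV 0)))) (ESub (EM (ESub (EM (EM (EV 2) (EV 4)) (EM (EV 0) (EV 3))) (EM (EM (EM (EV 2) (EV 4)) (EV 0)) (EV 3))) (EV 1)) (EM (ESub (EM (EM (EV 2) (EV 4)) (EM (EV 1) (EV 3))) (EM (EM (EM (EV 2) (EV 4)) (EV 1)) (EV 3))) (EV 0)))).
Definition E13 := (EM (ESub (ESub (EM (EM (EV 0) (EV 3)) (EM (EV 1) (EV 4))) (EM (EM (EV 0) (EV 4)) (EM (EV 1) (EV 3)))) (ESub (EM (ESub (EM (EV 0) (EM (EV 3) (EV 1))) (EM (EM (EV 0) (EV 3)) (EV 1))) (EV 4)) (EM (ESub (EM (EV 0) (EM (EV 4) (EV 1))) (EM (EM (EV 0) (EV 4)) (EV 1))) (EV 3)))) (EV 2)).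
Definition E14 := (ESub (ESub (EM (EM (EM (EV 1) (EV 4)) (EV 0)) (EM (EV 3) (EV 2))) (EM (EM (EM (EV 1) (EV 4)) (EV 2)) (EM (EV 3) (EV 0)))) (ESub (EM (ESub (EM (EM (EV 1) (EV 4)) (EM (EV 0) (EV 3))) (EM (EM (EM (EV 1) (EV 4)) (EV 0)) (EV 3))) (EV 2)) (EM (ESub (EM (EM (EV 1) (EV 4)) (EM (EV 2) (EV 3))) (EM (EM (EM (EV 1) (EV 4)) (EV 2)) (EV 3))) (EV 0)))).
Definition E15 := (EM (ESub (ESub (EM (EM (EV 0) (EV 3)) (EM (EV 2) (EV 4))) (EM (EM (EV 0) (EV 4)) (EM (EV 2) (EV 3)))) (ESub (EM (ESub (EM (EV 0) (EM (EV 3) (EV 2))) (EM (EM (EV 0) (EV 3)) (EV 2))) (EV 4)) (EM (ESub (EM (EV 0) (EM (EV 4) (EV 2))) (EM (EM (EV 0) (EV 4)) (EV 2))) (EV 3)))) (EV 1)).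
Definition E16 := (ESub (ESub (EM (EM (EM (EV 1) (EV 2)) (EV 0)) (EM (EV 3) (EV 4))) (EM (EM (EM (EV 1) (EV 2)) (EV 4)) (EM (EV 3) (EV 0)))) (ESub (EM (ESub (EM (EM (EV 1) (EV 2)) (EM (EV 0) (EV 3))) (EM (EM (EM (EV 1) (EV 2)) (EV 0)) (EV 3))) (EV 4)) (EM (ESub (EM (EM (EV 1) (EV 2)) (EM (EV 4) (EV 3))) (EM (EM (EM (EV 1) (EV 2)) (EV 4)) (EV 3))) (EV 0)))).
Definition E17 := (ESub (ESub (EM (EM (EV 0) (EM (EV 1) (EV 2))) (EM (EV 3) (EV 4))) (EM (EM (EV 0) (EV 4)) (EM (EV 3) (EM (EV 1) (EV 2))))) (ESub (EM (ESub (EM (EV 0) (EM (EM (EV 1) (EV 2)) (EV 3))) (EM (EM (EV 0) (EM (EV 1) (EV 2))) (EV 3))) (EV 4)) (EM (ESub (EM (EV 0) (EM (EV 4) (EV 3))) (EM (EM (EV 0) (EV 4)) (EV 3))) (EM (EV 1) (EV 2))))).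
Definition E18 := (ESub (ESub (EM (EM (EV 0) (EV 3)) (EM (EM (EV 1) (EV 2)) (EV 4))) (EM (EM (EV 0) (EV 4)) (EM (EM (EV 1) (EV 2)) (EV 3)))) (ESub (EM (ESub (EM (EV 0) (EM (EV 3) (EM (EV 1) (EV 2)))) (EM (EM (EV 0) (EV 3)) (EM (EV 1) (EV 2)))) (EV 4)) (EM (ESub (EM (EV 0) (EM (EV 4) (EM (EV 1) (EV 2)))) (EM (EM (EV 0) (EV 4)) (EM (EV 1) (EV 2)))) (EV 3)))).
Definition E19 := (ESub (ESub (EM (EM (EV 0) (EV 3)) (EM (EV 4) (EM (EV 1) (EV 2)))) (EM (EM (EV 0) (EM (EV 1) (EV 2))) (EM (EV 4) (EV 3)))) (ESub (EM (ESub (EM (EV 0) (EM (EV 3) (EV 4))) (EM (EM (EV 0) (EV 3)) (EV 4))) (EM (EV 1) (EV 2))) (EM (ESub (EM (EV 0) (EM (EM (EV 1) (EV 2)) (EV 4))) (EM (EM (EV 0) (EM (EV 1) (EV 2))) (EV 4))) (EV 3)))).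
Definition E20 := (ESub (ESub (EM (EM (EM (EV 2) (EV 3)) (EV 0)) (EM (EV 4) (EV 1))) (EM (EM (EM (EV 2) (EV 3)) (EV 1)) (EM (EV 4) (EV 0)))) (ESub (EM (ESub (EM (EM (EV 2) (EV 3)) (EM (EV 0) (EV 4))) (EM (EM (EM (EV 2) (EV 3)) (EV 0)) (EV 4))) (EV 1)) (EM (ESub (EM (EM (EV 2) (EV 3)) (EM (EV 1) (EV 4))) (EM (EM (EM (EV 2) (EV 3)) (EV 1)) (EV 4))) (EV 0)))).
Definition E21 := (ESub (ESub (EM (EM (EM (EV 1) (EV 3)) (EV 0)) (EM (EV 4) (EV 2))) (EM (EM (EM (EV 1) (EV 3)) (EV 2)) (EM (EV 4) (EV 0)))) (ESub (EM (ESub (EM (EM (EV 1) (EV 3)) (EM (EV 0) (EV 4))) (EM (EM (EM (EV 1) (EV 3)) (EV 0)) (EV 4))) (EV 2)) (EM (ESub (EM (EM (EV 1) (EV 3)) (EM (EV 2) (EV 4))) (EM (EM (EM (EV 1) (EV 3)) (EV 2)) (EV 4))) (EV 0)))).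
Definition E22 := (ESub (ESub (EM (EM (EM (EV 1) (EV 2)) (EV 0)) (EM (EV 4) (EV 3))) (EM (EM (EM (EV 1) (EV 2)) (EV 3)) (EM (EV 4) (EV 0)))) (ESub (EM (ESub (EM (EM (EV 1) (EV 2)) (EM (EV 0) (EV 4))) (EM (EM (EM (EV 1) (EV 2)) (EV 0)) (EV 4))) (EV 3)) (EM (ESub (EM (EM (EV 1) (EV 2)) (EM (EV 3) (EV 4))) (EM (EM (EM (EV 1) (EV 2)) (EV 3)) (EV 4))) (EV 0)))).
Definition E23 := (EM (ESub (ESub (EM (EM (EV 1) (EV 0)) (EM (EV 2) (EV 3))) (EM (EM (EV 1) (EV 3)) (EM (EV 2) (EV 0)))) (ESub (EM (ESub (EM (EV 1) (EM (EV 0) (EV 2))) (EM (EM (EV 1) (EV 0)) (EV 2))) (EV 3)) (EM (ESub (EM (EV 1) (EM (EV 3) (EV 2))) (EM (EM (EV 1) (EV 3)) (EV 2))) (EV 0)))) (EV 4)).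
Definition E24 := (EM (ESub (ESub (EM (EM (EV 1) (EV 0)) (EM (EV 3) (EV 4))) (EM (EM (EV 1) (EV 4)) (EM (EV 3) (EV 0)))) (ESub (EM (ESub (EM (EV 1) (EM (EV 0) (EV 3))) (EM (EM (EV 1) (EV 0)) (EV 3))) (EV 4)) (EM (ESub (EM (EV 1) (EM (EV 4) (EV 3))) (EM (EM (EV 1) (EV 4)) (EV 3))) (EV 0)))) (EV 2)).
Definition E25 := (EM (ESub (ESub (EM (EM (EV 1) (EV 0)) (EM (EV 4) (EV 3))) (EM (EM (EV 1) (EV 3)) (EM (EV 4) (EV 0)))) (ESub (EM (ESub (EM (EV 1) (EM (EV 0) (EV 4))) (EM (EM (EV 1) (EV 0)) (EV 4))) (EV 3)) (EM (ESub (EM (EV 1) (EM (EV 3) (EV 4))) (EM (EM (EV 1) (EV 3)) (EV 4))) (EV 0)))) (EV 2)).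
Definition E26 := (ESub (ESub (EM (EM (EV 1) (EM (EV 0) (EV 4))) (EM (EV 2) (EV 3))) (EM (EM (EV 1) (EV 3)) (EM (EV 2) (EM (EV 0) (EV 4))))) (ESub (EM (ESub (EM (EV 1) (EM (EM (EV 0) (EV 4)) (EV 2))) (EM (EM (EV 1) (EM (EV 0) (EV 4))) (EV 2))) (EV 3)) (EM (ESub (EM (EV 1) (EM (EV 3) (EV 2))) (EM (EM (EV 1) (EV 3)) (EV 2))) (EM (EV 0) (EV 4))))).
Definition E27 := (ESub (ESub (EM (EM (EV 1) (EV 2)) (EM (EV 3) (EM (EV 0) (EV 4)))) (EM (EM (EV 1) (EM (EV 0) (EV 4))) (EM (EV 3) (EV 2)))) (ESub (EM (ESub (EM (EV 1) (EM (EV 2) (EV 3))) (EM (EM (EV 1) (EV 2)) (EV 3))) (EM (EV 0) (EV 4))) (EM (ESub (EM (EV 1) (EM (EM (EV 0) (EV 4)) (EV 3))) (EM (EM (EV 1) (EM (EV 0) (EV 4))) (EV 3))) (EV 2)))).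
Definition E28 := (EM (ESub (ESub (EM (EM (EV 1) (EV 2)) (EM (EV 3) (EV 4))) (EM (EM (EV 1) (EV 4)) (EM (EV 3) (EV 2)))) (ESub (EM (ESub (EM (EV 1) (EM (EV 2) (EV 3))) (EM (EM (EV 1) (EV 2)) (EV 3))) (EV 4)) (EM (ESub (EM (EV 1) (EM (EV 4) (EV 3))) (EM (EM (EV 1) (EV 4)) (EV 3))) (EV 2)))) (EV 0)).
Definition E29 := (ESub (ESub (EM (EM (EV 1) (EV 2)) (EM (EV 4) (EM (EV 0) (EV 3)))) (EM (EM (EV 1) (EM (EV 0) (EV 3))) (EM (EV 4) (EV 2)))) (ESub (EM (ESub (EM (EV 1) (EM (EV 2) (EV 4))) (EM (EM (EV 1) (EV 2)) (EV 4))) (EM (EV 0) (EV 3))) (EM (ESub (EM (EV 1) (EM (EM (EV 0) (EV 3)) (EV 4))) (EM (EM (EV 1) (EM (EV 0) (EV 3))) (EV 4))) (EV 2)))).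
Definition E30 := (EM (ESub (ESub (EM (EM (EV 1) (EV 2)) (EM (EV 4) (EV 3))) (EM (EM (EV 1) (EV 3)) (EM (EV 4) (EV 2)))) (ESub (EM (ESub (EM (EV 1) (EM (EV 2) (EV 4))) (EM (EM (EV 1) (EV 2)) (EV 4))) (EV 3)) (EM (ESub (EM (EV 1) (EM (EV 3) (EV 4))) (EM (EM (EV 1) (EV 3)) (EV 4))) (EV 2)))) (EV 0)).
Definition E31 := (ESub (ESub (EM (EM (EM (EV 0) (EV 4)) (EV 1)) (EM (EV 3) (EV 2))) (EM (EM (EM (EV 0) (EV 4)) (EV 2)) (EM (EV 3) (EV 1)))) (ESub (EM (ESub (EM (EM (EV 0) (EV 4)) (EM (EV 1) (EV 3))) (EM (EM (EM (EV 0) (EV 4)) (EV 1)) (EV 3))) (EV 2)) (EM (ESub (EM (EM (EV 0) (EV 4)) (EM (EV 2) (EV 3))) (EM (EM (EM (EV 0) (EV 4)) (EV 2)) (EV 3))) (EV 1)))).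
Definition E32 := (ESub (ESub (EM (EM (EM (EV 0) (EV 3)) (EV 1)) (EM (EV 4) (EV 2))) (EM (EM (EM (EV 0) (EV 3)) (EV 2)) (EM (EV 4) (EV 1)))) (ESub (EM (ESub (EM (EM (EV 0) (EV 3)) (EM (EV 1) (EV 4))) (EM (EM (EM (EV 0) (EV 3)) (EV 1)) (EV 4))) (EV 2)) (EM (ESub (EM (EM (EV 0) (EV 3)) (EM (EV 2) (EV 4))) (EM (EM (EM (EV 0) (EV 3)) (EV 2)) (EV 4))) (EV 1)))).
Definition BIG := (EAdd (EZs (Posz 3) E1) (EAdd (EZs (Negz 2) E2) (EAdd (EZs (Negz 1) E3) (EAdd (EZs (Posz 2) E4) (EAdd (EZs (Negz 2) E5) (EAdd (EZs (Posz 2) E6) (EAdd (EZs (Posz 1) E7) (EAdd (EZs (Posz 2) E8) (EAdd (EZs (Negz 1) E9) (EAdd (EZs (Posz 2) E10) (EAdd (EZs (Negz 1) E11) (EAdd (EZs (Posz 1) E12) (EAdd (EZs (Posz 2) E13) (EAdd (EZs (Negz 2) E14) (EAdd (EZs (Posz 2) E15) (EAdd (EZs (Posz 2) E16) (EAdd (EZs (Negz 1) E17) (EAdd (EZs (Posz 2) E18) (EAdd (EZs (Negz 1) E19) (EAdd (EZs (Negz 0) E20) (EAdd (EZs (Posz 3) E21) (EAdd (EZs (Negz 1) E22) (EAdd (EZs (Negz 2) E23) (EAdd (EZs (Posz 2) E24) (EAdd (EZs (Negz 1) E25) (EAdd (EZs (Negz 2) E26) (EAdd (EZs (Negz 1)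 E27) (EAdd (EZs (Negz 1) E28) (EAdd (EZs (Posz 2) E29) (EAdd (EZs (Posz 2) E30) (EAdd (EZs (Posz 1) E31) (EAdd (EZs (Negz 0) E32) (EZs (Negz 2) EG))))))))))))))))))))))))))))))))).

Lemma tkS (A : zmodType) (u v : A) : u = v -> u - v = 0.
Proof. by move=> ->; rewrite subrr. Qed.

Lemma tkT (F : fieldType) (A : lmodType F) (mul : A -> A -> A) :
  bilinear_mul mul -> forall (u v e : A), u = v -> mul (u - v) e = 0.
Proof. by move=> hb u v e ->; rewrite subrr mul0l'. Qed.
End Tk.
Import Tk.
Import GRing.Theory.

Theorem mainTheorem20 (F : fieldType) (A : lmodType F) (mul : A -> A -> A)
  (hchar : ~~ (3%N \in [pchar F]))
  (hbil : bilinear_mul mul) (hcomm : commutative_mul mul) (htk : tortken mul) :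
  forall a b c x y : A,
    assoc mul a (assoc mul b x c) y + assoc mul b (assoc mul c x a) y
    + assoc mul c (assoc mul a x b) y
    - assoc mul a (assoc mul b y c) x - assoc mul b (assoc mul c y a) x
    - assoc mul c (assoc mul a y b) x = 0.
Proof.
move=> a b c x y.
pose env := fun n => nth 0 [:: a; b; c; x; y] n.
have key : evale mul env BIG = 0.
  apply: (reflect_zero hbil hcomm); vm_compute; reflexivity.
pose tkT := @tkT F A mul hbil.
have h1 : evale mul env E1 = 0 := tkT _ _ y (htk a b c x).
have h2 : evale mul env E2 = 0 := tkS (htk a (mul c y) b x).
have h3 : evale mul env E3 = 0 := tkT _ _ c (htk a b x y).
have h4 : evale mul env E4 = 0 := tkT _ _ c (htk a b y x).
have h5 : evale mul env E5 = 0 := tkT _ _ y (htk a c b x).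
have h6 : evale mul env E6 = 0 := tkS (htk (mul b y) a c x).
have h7 : evale mul env E7 = 0 := tkS (htk a (mul b y) c x).
have h8 : evale mul env E8 = 0 := tkS (htk a c (mul b y) x).
have h9 : evale mul env E9 = 0 := tkS (htk (mul b x) a c y).
have h10 : evale mul env E10 = 0 := tkS (htk a (mul b x) c y).
have h11 : evale mul env E11 = 0 := tkS (htk a c (mul b x) y).
have h12 : evale mul env E12 = 0 := tkS (htk (mul c y) a x b).
have h13 : evale mul env E13 = 0 := tkT _ _ c (htk a x b y).
have h14 : evale mul env E14 = 0 := tkS (htk (mul b y) a x c).
have h15 : evale mul env E15 = 0 := tkT _ _ b (htk a x c y).
have h16 : evale mul env E16 = 0 := tkS (htk (mul b c) a x y).
have h17 : evale mul env E17 = 0 := tkS (htk a (mul b c) x y).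
have h18 : evale mul env E18 = 0 := tkS (htk a x (mul b c) y).
have h19 : evale mul env E19 = 0 := tkS (htk a x y (mul b c)).
have h20 : evale mul env E20 = 0 := tkS (htk (mul c x) a y b).
have h21 : evale mul env E21 = 0 := tkS (htk (mul b x) a y c).
have h22 : evale mul env E22 = 0 := tkS (htk (mul b c) a y x).
have h23 : evale mul env E23 = 0 := tkT _ _ y (htk b a c x).
have h24 : evale mul env E24 = 0 := tkT _ _ c (htk b a x y).
have h25 : evale mul env E25 = 0 := tkT _ _ c (htk b a y x).
have h26 : evale mul env E26 = 0 := tkS (htk b (mul a y) c x).
have h27 : evale mul env E27 = 0 := tkS (htk b c x (mul a y)).
have h28 : evale mul env E28 = 0 := tkT _ _ a (htk b c x y).
have h29 : evale mul env E29 = 0 := tkS (htk b c y (mul a x)).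
have h30 : evale mul env E30 = 0 := tkT _ _ a (htk b c y x).
have h31 : evale mul env E31 = 0 := tkS (htk (mul a y) b x c).
have h32 : evale mul env E32 = 0 := tkS (htk (mul a x) b y c).
have key0 : evale mul env E1 *~ (Posz 3) + (evale mul env E2 *~ (Negz 2) + (evale mul env E3 *~ (Negz 1) + (evale mul env E4 *~ (Posz 2) + (evale mul env E5 *~ (Negz 2) + (evale mul env E6 *~ (Posz 2) + (evale mul env E7 *~ (Posz 1) + (evale mul env E8 *~ (Posz 2) + (evale mul env E9 *~ (Negz 1) + (evale mul env E10 *~ (Posz 2) + (evale mul env E11 *~ (Negz 1) + (evale mul env E12 *~ (Posz 1) + (evale mul env E13 *~ (Posz 2) + (evale mul env E14 *~ (Negz 2) + (evale mul env E15 *~ (Posz 2) + (evale mul env E16 *~ (Posz 2) + (evale mul env E17 *~ (Negz 1) + (evale mul env E18 *~ (Posz 2) + (evale mul env E19 *~ (Negz 1) + (evale mul env E20 *~ (Negz 0) + (evale mul env E21 *~ (Posz 3) + (evale mul env E22 *~ (Negz 1) + (evale mul env E23 *~ (Negz 2) + (evale mul env E24 *~ (Posz 2) + (evale mul env E25 *~ (Negz 1) + (evale mul env E26 *~ (Negz 2) + (evale mul env E27 *~ (Negz 1) + (evale mul env E28 *~ (Negz 1) + (evale mul env E29 *~ (Posz 2) + (evale mul env E30 *~ (Posz 2) + (evale mul env E31 *~ (Posz 1) + (evale mul env E32 *~ (Negz 0) + (evale mul env EG *~ (Negz 2))))))))))))))))))))))))))))))))) = 0 := key.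
rewrite h1 h2 h3 h4 h5 h6 h7 h8 h9 h10 h11 h12 h13 h14 h15 h16 h17 h18 h19 h20 h21 h22 h23 h24 h25 h26 h27 h28 h29 h30 h31 h32 in key0.
rewrite !mul0rz !add0r in key0.
suff hG : evale mul env EG = 0 by exact: hG.
move: key0; set v := evale mul env EG.
have hF3 : (3%:R : F) != 0.
  by move: hchar; rewrite inE /=.
move/eqP; rewrite NegzE mulrNz oppr_eq0 -pmulrn -scaler_nat scaler_eq0 (negbTE hF3) /=.
by move/eqP.
Qed.
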